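(* Let $v\in P_4$ be one of $x_1x_2^{7}x_3^{10}x_4^{12}$, $x_1^{7}x_2x_3^{10}x_4^{12}$, $x_1^{3}x_2^{3}x_3^{12}x_4^{12}$, $x_1^{3}x_2^{5}x_3^{8}x_4^{14}$, $x_1^{3}x_2^{5}x_3^{14}x_4^{8}$, $x_1^{7}x_2^{7}x_3^{8}x_4^{8}$. Then for every $1\le i\le5$ the monomial $x_i^{15}f_i(v)\in P_5$ is strictly inadmissible.
   Context: $P_k=\mathbb F_2[x_1,\dots,x_k]$, $\deg x_i=1$, modules over the mod-2 Steenrod algebra $\mathcal A$. For $1\le i\le5$, $f_i:P_4\to P_5$ is the algebra homomorphism with $f_i(x_u)=x_u$ for $u<i$ and $f_i(x_u)=x_{u+1}$ for $i\le u\le4$. $\mathcal A(s-1)$ is the sub-Hopf algebra generated by $Sq^r$, $0\le r<2^s$, with augmentation ideal $\mathcal A(s-1)^+$. For $x=x_1^{a_1}\cdots x_5^{a_5}$: weight vector $\omega_i(x)=\sum_j\alpha_{i-1}(a_j)$ ($\alpha_r(a)$ the $r$-th binary digit), exponent vector $\sigma(x)=(a_1,\dots,a_5)$, both ordered left-lexicographically; for monomials of equal degree, $x<y$ iff $\omega(x)<\omega(y)$, or $\omega(x)=\omega(y)$ and $\sigma(x)<\sigma(y)$. $P_5^-(\omega)$ is spanned by monomials $y$ of degree $\sum_i2^{i-1}\omega_i$ with $\omega(y)<\omega$. A monomial $x$ is strictly inadmissible if there are monomials $y_1,\dots,y_r<x$ with $x+\sum_jy_j\in\mathcal A(s-1)^+P_5+P_5^-(\omega(x))$,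 where $s=\max\{i:\omega_i(x)>0\}$. *)

(* Defs.v *)
From HB Require Import structures.
From mathcomp Require Import all_boot all_order all_algebra.
From mathcomp Require Import mpoly.
Set Implicit Arguments. Unset Strict Implicit. Unset Printing Implicit Defensive.
Import Order.TTheory GRing.Theory.
Local Open Scope ring_scope.

(* P_k = F_2[x_1,...,x_k]; variables are indexed from 0, i.e. x_{u} = 'X_(u-1). *)
Notation P k := {mpoly 'F_2[k]}.

(* Steenrod square Sq^r on a monomial x^m, via the Cartan formula and
   Sq^t(x^a) = binom(a,t) x^(a+t):
   Sq^r(x^m) = sum_{k, |k| = r} (prod_j binom(m_j,k_j)) x^(m+k). *)
Definition Sq_mon n (r : nat) (m : 'X_{1..n}) : P n :=
  \sum_(k : 'X_{1..n < r.+1} | mdeg k == r)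
     (\prod_(j < n) 'C(m j, k j))%:R *: 'X_[(m + k)%MM].

Definition Sq n (r : nat) (p : P n) : P n :=
  \sum_(m <- msupp p) p@_m *: Sq_mon r m.

Definition Sq_word n (w : seq nat) (p : P n) : P n := foldr (@Sq n) p w.

(* A(s-1)^+ P_n: A(s-1) is generated by Sq^r, 0 <= r < 2^s (Sq^0 = 1), so its
   augmentation ideal is spanned by nonempty words in the Sq^r, 0 < r < 2^s;
   A(s-1)^+ P_n is the set of finite sums of such words applied to polynomials
   (F_2 coefficients absorbed into the polynomials). *)
Definition AplusP n (s : nat) (p : P n) : Prop :=
  exists (N : nat) (ws : 'I_N -> seq nat) (qs : 'I_N -> P n),
    (forall j, ws j != [::] /\ all (fun r => (0 < r)%N && (r < 2 ^ s)%N) (ws j))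
    /\ p = \sum_(j < N) Sq_word (ws j) (qs j).

Definition alpha (r a : nat) : nat := odd (a %/ 2 ^ r).

(* weight vector, indexed from 1: omega_i(x) = sum_j alpha_{i-1}(a_j). *)
Definition omega n (m : 'X_{1..n}) (i : nat) : nat :=
  (\sum_(j < n) alpha i.-1 (m j))%N.

(* exponent vector, indexed from 1: sigma_i(x) = a_i (0 beyond n). *)
Definition sigma n (m : 'X_{1..n}) (i : nat) : nat := nth 0%N (multinom_val m) i.-1.

Definition lexlt (u v : nat -> nat) : Prop :=
  exists i, (0 < i)%N /\ (forall j, (0 < j < i)%N -> u j = v j) /\ (u i < v i)%N.

Definition seq_eq1 (u v : nat -> nat) : Prop := forall i, (0 < i)%N -> u i = v i.

Definition mon_lt n (y x : 'X_{1..n}) : Prop :=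
  mdeg y = mdeg x /\
  (lexlt (omega y) (omega x) \/
   (seq_eq1 (omega y) (omega x) /\ lexlt (sigma y) (sigma x))).

(* P_n^-(omega) for omega = omega(x): spanned by monomials y of degree
   deg x (= sum_i 2^(i-1) omega_i) with omega(y) < omega. *)
Definition Pminus n (d : nat) (w : nat -> nat) (p : P n) : Prop :=
  forall y, y \in msupp p -> mdeg y = d /\ lexlt (omega y) w.

(* s = max { i : omega_i(x) > 0 } (omega_i(x) = 0 for i > deg x + 1) *)
Definition smax n (x : 'X_{1..n}) : nat :=
  (\max_(i < (mdeg x).+2 | (0 < omega x i)%N) i)%N.

Definition strictly_inadmissible n (x : 'X_{1..n}) : Prop :=
  exists ys : seq 'X_{1..n},
    (forall y, y \in ys -> mon_lt y x) /\
    exists a b : P n,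
      AplusP (smax x) a /\ Pminus (mdeg x) (omega x) b /\
      'X_[x] + \sum_(y <- ys) 'X_[y] = a + b.

(* f_i : P_4 -> P_5 (i : 'I_5 is the paper's i minus 1): the algebra
   homomorphism sending x_u to x_u (u < i) and to x_{u+1} (u >= i);
   0-based this is the index map lift i. *)
Definition f_ (i : 'I_5) (p : P 4) : P 5 :=
  comp_mpoly [tuple ('X_(lift i j) : P 5) | j < 4] p.

Definition mono4 (e : seq nat) : P 4 := \prod_(j < 4) 'X_j ^+ nth 0%N e j.

(* Main.v *)
Require Import Defs.
From HB Require Import structures.
From mathcomp Require Import all_boot all_order all_algebra.
From mathcomp Require Import mpoly.
Set Implicit Arguments. Unset Strict Implicit. Unset Printing Implicit Defensive.

Fixpoint prow (a : nat) : seq bool :=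
  if a is a'.+1 then
    let r := prow a' in
    mkseq (fun i => if i is i'.+1 then addb (nth false r i') (nth false r i) else nth false r 0) a.+1
  else [:: true].

Definition obT (T : seq (seq bool)) (a b : nat) : bool := nth false (nth [::] T a) b.
Definition table := map prow (iota 0 64).

Definition getL (L : seq nat) : nat -> nat := fun j => nth 0%N L j.
Definition I5 := iota 0 5.
Definition le5 (z g : nat -> nat) := all (fun j => z j <= g j)%N I5.
Definition deg5 (g : nat -> nat) := sumn [seq g j | j <- I5].
Definition cf (ob : nat -> nat -> bool) (r : nat) (z g : nat -> nat) : bool :=
  [&& le5 z g, deg5 (fun j => g j - z j)%N == r & all (fun j => ob (z j) (g j - z j)%N) I5].
Definition cA ob (cert : seq (nat * seq nat)) (g : nat -> nat) : bool :=
  foldr (fun p b => addb (cf ob p.1 (getL p.2) g) b) false cert.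
Definition om (g : nat -> nat) (i : nat) : nat := sumn [seq alpha i.-1 (g j) | j <- I5].
Definition eq5 (g h : nat -> nat) := all (fun j => g j == h j) I5.
Fixpoint lexb (u v : nat -> nat) (i k : nat) : bool :=
  if k is k'.+1 then (u i < v i)%N || ((u i == v i) && lexb u v i.+1 k') else false.
Definition lowb (g h : nat -> nat) := lexb (om g) (om h) 1 7.
Definition ltkey (g h : nat -> nat) :=
  lowb g h || (all (fun i => om g i == om h i) (iota 1 6) &&
               lexb (fun i => g i.-1) (fun i => h i.-1) 1 5).
Fixpoint comps (r n : nat) : seq (seq nat) :=
  if n is n'.+1 then flatten [seq [seq a :: c | c <- comps (r - a) n'] | a <- iota 0 r.+1]
  else if r == 0 then [:: [::]] else [::].
Definition addL (z k : seq nat) := [seq (nth 0 z j + nth 0 k j)%N | j <- I5].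
Definition cands (cert : seq (nat * seq nat)) :=
  flatten [seq [seq addL p.2 k | k <- comps p.1 5] | p <- cert].
Definition validg (p : nat * seq nat) :=
  [&& (0 < p.1)%N, (p.1 < 16)%N, size p.2 == 5 & all (fun a => a < 64)%N p.2].
Definition check ob (cert : seq (nat * seq nat)) (xs : seq nat) :=
  let X := getL xs in
  [&& size xs == 5, all validg cert, cA ob cert X, (0 < om X 4)%N, (4 < (deg5 X).+2)%N,
      (deg5 X < 64)%N &
      all (fun L => let g := getL L in
             cA ob cert g ==> (eq5 g X || ((deg5 g == deg5 X) && ltkey g X))) (cands cert)].
Import Order.TTheory GRing.Theory.
Local Open Scope ring_scope.

Lemma prowE a b : nth false (prow a) b = odd 'C(a, b).
Proof.
elim: a b => [|a IH] b.
  by case: b => [|[|b]] //=; rewrite bin0n.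
rewrite /=; case: (ltnP b a.+2) => hb.
  rewrite nth_mkseq //; case: b hb => [|b] hb; first by rewrite IH !bin0.
  by rewrite binS oddD !IH addbC.
by rewrite nth_default ?size_mkseq // bin_small.
Qed.

Lemma obT_table a b : (a < 64)%N -> obT table a b = odd 'C(a, b).
Proof.
by move=> ha; rewrite /obT /table (nth_map 0%N) ?size_iota // nth_iota // add0n prowE.
Qed.

Lemma natrF2 (n : nat) : (n%:R : 'F_2) = (odd n)%:R.
Proof.
elim: n => [//|n IH]; rewrite [LHS]mulrSr IH /=.
case: (odd n) => /=; [exact: (@val_inj _ _ _ (1 + 1 : 'F_2) 0 (erefl _)) | exact: add0r].
Qed.

Lemma Sq_mon_coef n r (z M : 'X_{1..n}) :
  (Sq_mon r z)@_M =
  if (z <= M)%MM && (mdeg (M - z) == r) then ((\prod_(j < n) 'C(z j, M j - z j))%:R : 'F_2) else 0.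
Proof.
rewrite /Sq_mon raddf_sum /=.
rewrite (eq_bigr (fun k : 'X_{1..n < r.+1} => (\prod_(j<n) 'C(z j, k j))%:R * (((z + k)%MM == M)%:R : 'F_2))); last by move=> k _; rewrite mcoeffZ mcoeffX.
case: ifP => [/andP[le /eqP dg] | H].
- have hk : (mdeg (M - z)%MM < r.+1)%N by rewrite dg.
  rewrite (bigD1 (BMultinom hk)) /=; last by rewrite dg.
  rewrite addmC submK // eqxx mulr1 [X in _ + X]big1 ?addr0.
    by under eq_bigr => j _ do rewrite mnmBE.
  move=> k /andP[_ ne]; case: eqP => [e|]; last by rewrite mulr0.
  by move: ne; rewrite -val_eqE /= -e addmC addmK eqxx.
- rewrite big1 // => k /eqP dk; case: eqP => [e|]; last by rewrite mulr0.
  have le : (z <= M)%MM by rewrite -e lem_addr.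
  have ek : (M - z = k)%MM by rewrite -e addmC addmK.
  by move: H; rewrite le ek dk eqxx.
Qed.

Definition gm n (M : 'X_{1..n}) : nat -> nat := fun j => nth 0%N (tval (multinom_val M)) j.

Lemma gmE n (M : 'X_{1..n}) (j : 'I_n) : M j = gm M j.
Proof. exact: mnm_nth. Qed.

Lemma forall_iota n (P : nat -> bool) : [forall i : 'I_n, P i] = all P (iota 0 n).
Proof.
apply/forallP/allP => H j.
  by rewrite mem_iota add0n => /andP[_ lt]; exact: (H (Ordinal lt)).
by apply: H; rewrite mem_iota add0n ltn_ord.
Qed.

Lemma sum_iota n (F : nat -> nat) : (\sum_(i < n) F i)%N = sumn [seq F j | j <- iota 0 n].
Proof. by rewrite -(big_mkord xpredT F) /index_iota subn0 sumnE big_map. Qed.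

Lemma prod_iota n (F : nat -> nat) : (\prod_(i < n) F i)%N = \prod_(j <- iota 0 n) F j.
Proof. by rewrite -(big_mkord xpredT F) /index_iota subn0. Qed.

Lemma odd_prod (s : seq nat) (F : nat -> nat) :
  odd (\prod_(j <- s) F j) = all (fun j => odd (F j)) s.
Proof. by elim: s => [|a s IH]; rewrite ?big_nil ?big_cons //= oddM IH. Qed.

Lemma le5E (z M : 'X_{1..5}) : (z <= M)%MM = le5 (gm z) (gm M).
Proof.
rewrite /lem /le5 /I5 -(forall_iota 5 (fun j => gm z j <= gm M j)%N).
by apply: eq_forallb => i; rewrite !gmE.
Qed.

Lemma mdeg5 (M : 'X_{1..5}) : mdeg M = deg5 (gm M).
Proof. by rewrite mdegE (eq_bigr (fun i : 'I_5 => gm M i)) ?sum_iota // => i _; rewrite gmE. Qed.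

Lemma Sq_mon_coefL r (z M : 'X_{1..5}) :
  (Sq_mon r z)@_M = (cf (fun a b => odd 'C(a, b)) r (gm z) (gm M))%:R.
Proof.
rewrite Sq_mon_coef /cf le5E.
have -> : mdeg (M - z) = deg5 (fun j => gm M j - gm z j)%N.
  by rewrite /deg5 /I5 mdegE (eq_bigr (fun i : 'I_5 => gm M i - gm z i)%N) ?(sum_iota 5 (fun j => gm M j - gm z j)%N) // => i _; rewrite mnmBE !gmE.
case: (le5 _ _) => //=; case: (_ == r) => //=.
rewrite (eq_bigr (fun i : 'I_5 => 'C(gm z i, gm M i - gm z i))); last by move=> i _; rewrite !gmE.
by rewrite (prod_iota 5 (fun j => 'C(gm z j, gm M j - gm z j))) natrF2 odd_prod.
Qed.

Lemma F2_cases (c : 'F_2) : c = 0 \/ c = 1.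
Proof. by case: c => [[|[|k]] //= H]; [left|right]; apply/val_inj. Qed.

Lemma F2_nz (c : 'F_2) : c != 0 -> c = 1.
Proof. by case: (F2_cases c) => ->; rewrite ?eqxx. Qed.

Lemma F2_double (c : 'F_2) : c + c = 0.
Proof. by case: (F2_cases c) => ->; apply/val_inj. Qed.

Lemma F2_true : (true%:R : 'F_2) = 1.
Proof. by apply/val_inj. Qed.

Lemma F2_false : (false%:R : 'F_2) = 0.
Proof. by apply/val_inj. Qed.

Lemma F2_addb (b1 b2 : bool) : (b1%:R + b2%:R : 'F_2) = (addb b1 b2)%:R.
Proof. by case: b1; case: b2; apply/val_inj. Qed.

Lemma P_double (p : P 5) : p + p = 0.
Proof. by apply/mpolyP => m; rewrite mcoeffD mcoeff0 F2_double. Qed.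

Definition mkm (s : seq nat) : 'X_{1..5} := Multinom (insubd (nseq_tuple 5 0%N) s).

Lemma mkm_val s : size s = 5%N -> tval (multinom_val (mkm s)) = s.
Proof. by move=> h; rewrite /mkm /= val_insubd h eqxx. Qed.

Definition Apol (cert : seq (nat * seq nat)) : P 5 :=
  \sum_(p <- cert) Sq p.1 'X_[mkm p.2].

Lemma Sq_X r (m : 'X_{1..5}) : Sq r ('X_[m] : P 5) = Sq_mon r m.
Proof. by rewrite /Sq msuppX big_seq1 mcoeffX eqxx F2_true scale1r. Qed.

Definition oddC (a b : nat) := odd 'C(a, b).

Lemma coefA cert (M : 'X_{1..5}) : all validg cert ->
  (Apol cert)@_M = (cA oddC cert (gm M))%:R.
Proof.
rewrite /Apol; elim: cert => [|p cert IH]; first by rewrite big_nil mcoeff0 F2_false.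
move=> /andP[vp vc]; rewrite big_cons mcoeffD IH // Sq_X Sq_mon_coefL F2_addb /=.
case/and4P: vp => _ _ /eqP sz _.
by rewrite /gm mkm_val.
Qed.

Lemma lexbP (u v : nat -> nat) i k : lexb u v i k ->
  exists j, (i <= j)%N /\ (forall l, (i <= l < j)%N -> u l = v l) /\ (u j < v j)%N.
Proof.
elim: k i => [//|k IH] i /= /orP[lt | /andP[/eqP e /IH [j [ij [hl hj]]]]].
  by exists i; split => //; split => // l /andP[a b]; move: (leq_ltn_trans a b); rewrite ltnn.
exists j; split; first exact: ltnW.
split => // l /andP[il lj]; move: il; rewrite leq_eqVlt => /orP[/eqP <- //|il].
by apply: hl; rewrite il.
Qed.

Lemma lexb_lexlt (u v : nat -> nat) k : lexb u v 1 k -> lexlt u v.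
Proof.
move/lexbP => [j [ij [hl hj]]]; exists j; split => //; split => // l /andP[l0 lj]; apply: hl; rewrite l0.
Qed.

Lemma lexb_irr (u : nat -> nat) i k : lexb u u i k = false.
Proof. by elim: k i => [//|k IH] i /=; rewrite ltnn eqxx IH. Qed.

Lemma omegaE (M : 'X_{1..5}) i : omega M i = om (gm M) i.
Proof.
rewrite /omega /om /I5 (eq_bigr (fun j : 'I_5 => alpha i.-1 (gm M j))); last by move=> j _; rewrite gmE.
by rewrite (sum_iota 5 (fun j => alpha i.-1 (gm M j))).
Qed.

Lemma le_sumn (F : nat -> nat) (s : seq nat) j : j \in s -> (F j <= sumn [seq F l | l <- s])%N.
Proof.
elim: s => [//|a s IH]; rewrite inE /= => /orP[/eqP -> | /IH h]; first exact: leq_addr.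
exact: (leq_trans h (leq_addl _ _)).
Qed.

Lemma om_big (g : nat -> nat) i : (deg5 g < 64)%N -> (7 <= i)%N -> om g i = 0%N.
Proof.
move=> hd hi; rewrite /om.
have : all (fun j => alpha i.-1 (g j) == 0%N) I5.
  apply/allP => j jI; rewrite /alpha divn_small //.
  apply: (leq_ltn_trans (le_sumn g jI)); apply: (leq_trans hd).
  rewrite -[64%N]/(2 ^ 6)%N leq_exp2l //; by case: i hi.
by elim: I5 => [//|a s IH] /= /andP[/eqP -> /IH ->].
Qed.

Lemma comps_complete n r (k : seq nat) : size k = n -> sumn k = r -> k \in comps r n.
Proof.
elim: n r k => [|n IH] r [|a k]; [by move=> _ <- | by [] | by [] | ].
move=> [sk] sr.
change (a :: k \in flatten [seq [seq a0 :: c | c <- comps (r - a0) n] | a0 <- iota 0 r.+1]).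
apply/flattenP.
exists [seq a :: c | c <- comps (r - a) n].
  by apply/mapP; exists a => //; rewrite mem_iota add0n ltnS -sr /= leq_addr.
by apply/mapP; exists k => //; apply: IH => //; rewrite -sr addKn.
Qed.

Lemma cA_some ob cert g : cA ob cert g -> exists2 p, p \in cert & cf ob p.1 (getL p.2) g.
Proof.
elim: cert => [//|p cert IH] /=; case h: (cf _ _ _ _) => /=.
  by move=> _; exists p; rewrite ?inE ?eqxx.
by move/IH => [q qc hq]; exists q; rewrite // inE qc orbT.
Qed.

Lemma cands_complete ob cert (M : 'X_{1..5}) :
  cA ob cert (gm M) -> tval (multinom_val M) \in cands cert.
Proof.
move/cA_some => [p pc /and3P[hle /eqP hd _]].
apply/flattenP; exists [seq addL p.2 k | k <- comps p.1 5]; first by apply/mapP; exists p.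
apply/mapP; exists [seq (gm M j - getL p.2 j)%N | j <- I5].
  by apply: comps_complete; rewrite ?size_map ?size_iota // -hd.
apply: (@eq_from_nth _ 0%N); first by rewrite size_tuple size_map size_iota.
move=> j; rewrite size_tuple => hj.
rewrite (nth_map 0%N) ?size_iota // nth_iota // add0n (nth_map 0%N) ?size_iota // nth_iota //.
rewrite add0n subnKC //; move/allP: hle; apply; by rewrite mem_iota.
Qed.

Lemma nth_lt64 (s : seq nat) j : all (fun a => a < 64)%N s -> (nth 0%N s j < 64)%N.
Proof.
move=> h; case: (ltnP j (size s)) => hj; last by rewrite nth_default.
by move/allP: h; apply; rewrite mem_nth.
Qed.

Lemma cA_table cert g : all validg cert -> cA (obT table) cert g = cA oddC cert g.
Proof.
elim: cert => [//|p cert IH] /= /andP[vp vc]; rewrite IH //; congr (addb _ _).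
case/and4P: vp => _ _ _ h64; rewrite /cf; congr [&& _, _ & _].
by apply: eq_all => j; rewrite obT_table // nth_lt64.
Qed.

Lemma check_slow cert xs : check (obT table) cert xs -> check oddC cert xs.
Proof.
rewrite /check => /and5P[h1 h2 h3 h4 /andP[h5 /andP[h6 h7]]].
rewrite h1 h2 h4 h5 h6 -cA_table // h3 /=.
by apply: sub_all h7 => L; rewrite cA_table.
Qed.

Lemma eq_lexb (u u' v v' : nat -> nat) i k : u =1 u' -> v =1 v' -> lexb u v i k = lexb u' v' i k.
Proof. by move=> hu hv; elim: k i => [//|k IH] i /=; rewrite hu hv IH. Qed.

Lemma certify cert xs : check (obT table) cert xs -> strictly_inadmissible (mkm xs).
Proof.
move/check_slow; rewrite /check => /and5P[/eqP sz val cx om4 /andP[dg2 /andP[dg64 hall]]].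
set x := mkm xs.
have gx : gm x = getL xs by rewrite /gm /x mkm_val.
set A := Apol cert.
have cAE : forall M, A@_M = (cA oddC cert (gm M))%:R by move=> M; exact: coefA.
have F1 : A@_x = 1 by rewrite cAE gx cx F2_true.
have mdx : mdeg x = deg5 (getL xs) by rewrite mdeg5 gx.
have F2 : forall M, M \in msupp A -> M = x \/ (mdeg M = mdeg x /\ ltkey (gm M) (gm x)).
  move=> M; rewrite mcoeff_msupp cAE; case hM: (cA _ _ _); last by rewrite F2_false eqxx.
  move=> _; have := allP hall _ (cands_complete hM).
  rewrite /= [getL _]/(gm M) hM /= => /orP[he | /andP[/eqP hd hk]].
    left; apply/mnmP => j; rewrite !gmE gx; have := allP he j; rewrite mem_iota add0n ltn_ord => /(_ isT) /eqP; exact.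
  by right; rewrite mdeg5 mdx hd gx.
set lowM := fun M : 'X_{1..5} => lowb (gm M) (gm x).
have xS : x \in msupp A by rewrite mcoeff_msupp F1 oner_neq0.
have lx : lowM x = false by rewrite /lowM /lowb lexb_irr.
set S := msupp A.
set ys := [seq M <- S | (M != x) && ~~ lowM M].
set b := \sum_(M <- S | lowM M) ('X_[M] : P 5).
exists ys; split.
  move=> y; rewrite mem_filter => /andP[/andP[ne nl] yS].
  case: (F2 y yS) => [ey | [dy]]; first by rewrite ey eqxx in ne.
  move: nl; rewrite /lowM => nl.
  rewrite /ltkey (negbTE nl) orFb => /andP[heq hlex].
  split => //; right; split.
    move=> i i0; rewrite !omegaE; case: (ltnP i 7) => hi.
      have hin : i \in iota 1 6 by rewrite mem_iota i0.
      by apply/eqP; exact: (allP heq i hin).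
    by rewrite !om_big // -mdeg5 ?dy mdx.
  exact: (lexb_lexlt hlex).
exists A, b; split.
  exists (size cert), (fun j => [:: (nth (0%N, [::]) cert j).1]),
    (fun j => 'X_[mkm (nth (0%N, [::]) cert j).2]); split.
    move=> j; split => //=; rewrite andbT.
    have /and4P[r0 r16 _ _] : validg (nth (0%N, [::]) cert j) by apply: (allP val); rewrite mem_nth.
    rewrite r0 /=; apply: (leq_trans r16).
    have h4 : (4 <= smax x)%N.
      have h4' : (4 < (mdeg x).+2)%N by rewrite mdx.
      rewrite /smax; apply: (leq_bigmax_cond (Ordinal h4') (F := fun i : 'I_(mdeg x).+2 => nat_of_ord i)).
      by rewrite /= omegaE gx.
    by rewrite -[16%N]/(2 ^ 4)%N leq_exp2l.
  by rewrite /A /Apol (big_nth (0%N, [::])) big_mkord.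
split.
  move=> y; rewrite mcoeff_msupp.
  have : y \in [seq M <- S | lowM M] -> mdeg y = mdeg x /\ lexlt (omega y) (omega x).
    rewrite mem_filter => /andP[ly yS]; case: (F2 y yS) => [ey | [dy _]].
      by move: ly; rewrite ey lx.
    split => //; apply: (@lexb_lexlt _ _ 7); move: ly.
    by rewrite /lowM /lowb (@eq_lexb (om (gm y)) (omega y) (om (gm x)) (omega x) 1 7) // => i; rewrite omegaE.
  move=> H hy; apply: H; apply/negPn/negP => hn; move/negP: hy; apply.
  rewrite /b raddf_sum /= -big_filter big1_seq // => M /andP[_ MS].
  by rewrite mcoeffX; case: eqP => // e; move: hn; rewrite -e MS.
have AE : A = b + ('X_[x] + \sum_(y <- ys) 'X_[y]).
  rewrite {1}(mpolyE A) -/S.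
  have -> : \sum_(M <- S) A@_M *: 'X_[M] = \sum_(M <- S) ('X_[M] : P 5).
    by apply: eq_big_seq => M MS; rewrite (F2_nz (c := A@_M)) ?scale1r // -mcoeff_msupp.
  rewrite (bigID lowM) /=; congr (_ + _).
  rewrite -big_filter (bigD1_seq x) /=; last 2 first.
  - by rewrite mem_filter lx.
  - by rewrite filter_uniq // msupp_uniq.
  congr (_ + _); rewrite -big_filter /ys -filter_predI.
  by apply: congr_big => //; apply: eq_filter => M /=; rewrite andbC.
by rewrite AE [b + _]addrC -addrA P_double addr0.
Qed.
Definition certs : seq (seq nat * seq (nat * seq nat)) := [::
  ([:: 15; 1; 7; 10; 12], [:: (1, [:: 15; 1; 7; 10; 11]); (1, [:: 15; 1; 7; 9; 12]); (2, [:: 15; 1; 7; 9; 11]); (1, [:: 15; 2; 7; 7; 13]); (2, [:: 15; 1; 7; 7; 13]); (2, [:: 17; 1; 7; 7; 11]); (1, [:: 15; 1; 10; 7; 11]); (1, [:: 15; 1; 9; 7; 12]); (2, [:: 15; 1; 9; 7; 11]); (4, [:: 15; 1; 6; 7; 12]); (2, [:: 15; 1; 6; 7; 14]); (1, [:: 18; 1; 7; 7; 11])]);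
  ([:: 1; 15; 7; 10; 12], [:: (1, [:: 1; 15; 7; 10; 11]); (1, [:: 1; 15; 7; 9; 12]); (2, [:: 1; 15; 7; 9; 11]); (1, [:: 2; 15; 7; 7; 13]); (2, [:: 1; 15; 7; 7; 13]); (1, [:: 2; 15; 9; 7; 11]); (2, [:: 1; 15; 9; 7; 11]); (2, [:: 1; 17; 7; 7; 11]); (2, [:: 1; 15; 6; 7; 14]); (1, [:: 2; 17; 7; 7; 11]); (4, [:: 1; 15; 6; 7; 12])]);
  ([:: 1; 7; 15; 10; 12], [:: (1, [:: 1; 7; 15; 10; 11]); (1, [:: 1; 7; 15; 9; 12]); (2, [:: 1; 7; 15; 9; 11]); (2, [:: 1; 7; 17; 7; 11]); (2, [:: 1; 7; 15; 7; 13]); (2, [:: 1; 9; 15; 7; 11]); (1, [:: 2; 7; 15; 7; 13]); (1, [:: 2; 7; 17; 7; 11]); (1, [:: 1; 10; 15; 7; 11]); (1, [:: 1; 9; 15; 7; 12]); (4, [:: 1; 6; 15; 7; 12]); (2, [:: 1; 6; 15; 7; 14])]);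
  ([:: 1; 7; 10; 15; 12], [:: (1, [:: 1; 7; 10; 15; 11]); (1, [:: 1; 7; 9; 15; 12]); (2, [:: 1; 7; 9; 15; 11]); (2, [:: 1; 7; 7; 17; 11]); (2, [:: 1; 7; 7; 15; 13]); (1, [:: 2; 7; 7; 17; 11]); (2, [:: 1; 9; 7; 15; 11]); (1, [:: 2; 7; 7; 15; 13]); (1, [:: 1; 10; 7; 15; 11]); (1, [:: 1; 9; 7; 15; 12]); (4, [:: 1; 6; 7; 15; 12]); (2, [:: 1; 6; 7; 15; 14])]);
  ([:: 1; 7; 10; 12; 15], [:: (1, [:: 1; 7; 10; 11; 15]); (1, [:: 1; 7; 9; 12; 15]); (2, [:: 1; 7; 9; 11; 15]); (2, [:: 1; 9; 7; 11; 15]); (2, [:: 1; 7; 7; 13; 15]); (1, [:: 2; 9; 7; 11; 15]); (2, [:: 1; 7; 7; 11; 17]); (1, [:: 2; 7; 7; 13; 15]); (1, [:: 2; 7; 7; 11; 17]); (4, [:: 1; 6; 7; 12; 15]); (2, [:: 1; 6; 7; 14; 15])]);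
  ([:: 15; 7; 1; 10; 12], [:: (1, [:: 15; 7; 1; 10; 11]); (1, [:: 15; 7; 1; 9; 12]); (2, [:: 15; 7; 1; 9; 11]); (1, [:: 18; 7; 1; 7; 11]); (2, [:: 17; 7; 1; 7; 11]); (1, [:: 15; 7; 1; 8; 13]); (2, [:: 15; 7; 1; 7; 13]); (1, [:: 15; 7; 1; 7; 14]); (4, [:: 15; 4; 2; 7; 13]); (2, [:: 15; 9; 1; 7; 11]); (1, [:: 15; 9; 2; 7; 11]); (1, [:: 15; 9; 1; 7; 12]); (4, [:: 15; 5; 2; 7; 12])]);
  ([:: 7; 15; 1; 10; 12], [:: (1, [:: 7; 15; 1; 10; 11]); (1, [:: 7; 15; 1; 9; 12]); (2, [:: 7; 15; 1; 9; 11]); (1, [:: 7; 15; 2; 7; 13]); (2, [:: 7; 15; 1; 7; 13]); (1, [:: 8; 15; 1; 7; 13]); (4, [:: 4; 15; 2; 7; 13]); (1, [:: 7; 18; 1; 7; 11]); (2, [:: 7; 17; 1; 7; 11]); (1, [:: 10; 15; 1; 7; 11]); (1, [:: 9; 15; 1; 7; 12]); (2, [:: 9; 15; 1; 7; 11]); (4, [:: 6; 15; 1; 7; 12])]);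
  ([:: 7; 1; 15; 10; 12], [:: (2, [:: 7; 1; 15; 10; 10]); (2, [:: 7; 1; 15; 9; 11]); (4, [:: 7; 1; 15; 7; 11]); (1, [:: 7; 2; 15; 7; 13]); (2, [:: 7; 1; 15; 13; 7]); (4, [:: 7; 1; 15; 11; 7]); (1, [:: 11; 1; 15; 7; 10]); (4, [:: 11; 1; 15; 7; 7]); (4, [:: 7; 1; 19; 7; 7]); (2, [:: 13; 1; 15; 7; 7]); (2, [:: 6; 1; 15; 7; 14]); (4, [:: 7; 1; 15; 9; 9]); (1, [:: 9; 2; 15; 7; 11]); (2, [:: 9; 1; 15; 7; 11]); (4, [:: 10; 2; 15; 7; 7]); (2, [:: 12; 2; 15; 7; 7]); (2, [:: 10; 2; 15; 7; 9]); (2, [:: 7; 1; 17; 7; 11]); (4, [:: 9; 1; 15; 9; 7]); (2, [:: 7; 1; 21; 7; 7]); (4, [:: 9; 1; 15; 7; 9]); (1, [:: 7; 2; 15; 11; 9]); (1, [:: 11; 1; 15; 10; 7]); (1, [:: 11; 2; 17; 7; 7]); (1, [:: 10; 1; 15; 11; 7]); (1, [:: 9; 2; 15; 11; 7]); (4, [:: 7; 1; 17; 7; 9]); (1, [:: 7; 2; 19; 9; 7]); (2, [:: 10; 2; 15; 9; 7]); (4, [:: 7; 1; 17; 9; 7]); (4, [:: 9; 1; 17; 7; 7]); (4, [:: 5; 2; 15; 7; 12]); (1, [:: 7; 2; 19; 7; 9]); (1, [:: 7; 2; 17; 11; 7])]);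
  ([:: 7; 1; 10; 15; 12], [:: (2, [:: 7; 1; 10; 15; 10]); (2, [:: 7; 1; 9; 15; 11]); (4, [:: 7; 1; 7; 15; 11]); (2, [:: 7; 1; 13; 15; 7]); (4, [:: 7; 1; 11; 15; 7]); (2, [:: 9; 1; 7; 19; 7]); (2, [:: 7; 1; 7; 19; 9]); (4, [:: 9; 1; 7; 15; 9]); (4, [:: 7; 1; 7; 19; 7]); (1, [:: 10; 1; 7; 15; 11]); (1, [:: 9; 2; 7; 15; 11]); (2, [:: 9; 1; 7; 15; 11]); (1, [:: 7; 2; 7; 15; 13]); (4, [:: 11; 1; 7; 15; 7]); (2, [:: 7; 1; 7; 17; 11]); (4, [:: 9; 1; 7; 17; 7]); (4, [:: 7; 1; 9; 17; 7]); (1, [:: 7; 2; 11; 15; 9]); (1, [:: 9; 2; 11; 15; 7]); (1, [:: 12; 1; 7; 15; 9]); (1, [:: 11; 1; 7; 15; 10]); (2, [:: 10; 1; 7; 15; 10]); (2, [:: 13; 1; 7; 15; 7]); (1, [:: 11; 2; 7; 17; 7]); (1, [:: 12; 1; 9; 15; 7]); (1, [:: 11; 1; 10; 15; 7]); (2, [:: 10; 1; 10; 15; 7]); (2, [:: 7; 1; 9; 19; 7]); (1, [:: 7; 2; 11; 17; 7]); (4, [:: 7; 1; 9; 15; 9]); (2, [:: 6; 1; 7; 15; 14]); (4, [:: 9; 1; 9; 15; 7]); (4, [:: 7; 1; 7; 17; 9]); (4, [:: 5; 2; 7; 15; 12]); (1, [:: 7; 2; 7; 21; 7])]);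
  ([:: 7; 1; 10; 12; 15], [:: (1, [:: 7; 1; 10; 11; 15]); (1, [:: 7; 1; 9; 12; 15]); (2, [:: 7; 1; 9; 11; 15]); (1, [:: 7; 2; 7; 13; 15]); (2, [:: 7; 1; 7; 13; 15]); (2, [:: 7; 1; 7; 11; 17]); (1, [:: 9; 2; 7; 11; 15]); (1, [:: 9; 1; 7; 12; 15]); (2, [:: 9; 1; 7; 11; 15]); (4, [:: 5; 2; 7; 12; 15]); (2, [:: 6; 1; 7; 14; 15]); (1, [:: 7; 2; 7; 11; 17])]);
  ([:: 15; 3; 3; 12; 12], [:: (1, [:: 15; 3; 3; 11; 12]); (4, [:: 15; 3; 4; 7; 12]); (2, [:: 15; 2; 3; 11; 12]); (1, [:: 15; 3; 8; 7; 11]); (2, [:: 15; 2; 8; 7; 11])]);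
  ([:: 3; 15; 3; 12; 12], [:: (1, [:: 3; 15; 3; 12; 11]); (4, [:: 3; 15; 4; 12; 7]); (2, [:: 2; 15; 3; 12; 11]); (1, [:: 3; 15; 8; 11; 7]); (2, [:: 2; 15; 8; 11; 7])]);
  ([:: 3; 3; 15; 12; 12], [:: (1, [:: 3; 3; 15; 12; 11]); (1, [:: 4; 3; 15; 11; 11]); (2, [:: 2; 3; 15; 11; 12]); (2, [:: 2; 3; 15; 12; 11]); (4, [:: 4; 3; 15; 12; 7]); (4, [:: 4; 4; 15; 11; 7]); (4, [:: 3; 4; 15; 12; 7]); (1, [:: 8; 3; 15; 11; 7]); (1, [:: 3; 8; 15; 11; 7])]);
  ([:: 3; 3; 12; 15; 12], [:: (1, [:: 3; 3; 12; 15; 11]); (4, [:: 3; 4; 12; 15; 7]); (2, [:: 2; 3; 12; 15; 11]); (1, [:: 3; 8; 11; 15; 7]); (2, [:: 2; 8; 11; 15; 7])]);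
  ([:: 3; 3; 12; 12; 15], [:: (1, [:: 3; 3; 12; 11; 15]); (1, [:: 3; 4; 11; 11; 15]); (2, [:: 2; 3; 11; 12; 15]); (4, [:: 4; 3; 7; 12; 15]); (4, [:: 3; 4; 7; 12; 15]); (2, [:: 2; 3; 12; 11; 15]); (4, [:: 4; 4; 7; 11; 15]); (1, [:: 8; 3; 7; 11; 15]); (1, [:: 3; 8; 7; 11; 15])]);
  ([:: 15; 3; 5; 8; 14], [:: (2, [:: 15; 3; 5; 6; 14]); (2, [:: 15; 3; 3; 8; 14]); (4, [:: 15; 3; 3; 6; 14]); (1, [:: 15; 3; 3; 10; 13]); (2, [:: 15; 2; 3; 10; 13]); (1, [:: 15; 3; 3; 6; 17]); (1, [:: 19; 3; 3; 6; 13])]);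
  ([:: 3; 15; 5; 8; 14], [:: (1, [:: 3; 15; 5; 8; 13]); (1, [:: 3; 15; 5; 7; 14]); (2, [:: 3; 15; 5; 7; 13]); (2, [:: 3; 15; 5; 6; 14]); (4, [:: 3; 15; 3; 6; 14]); (1, [:: 6; 15; 3; 7; 13]); (2, [:: 5; 15; 3; 7; 13]); (2, [:: 3; 17; 3; 7; 13]); (2, [:: 2; 15; 6; 7; 13]); (1, [:: 3; 15; 3; 6; 17]); (2, [:: 3; 15; 4; 7; 14]); (1, [:: 3; 18; 3; 7; 13]); (2, [:: 3; 15; 3; 9; 13]); (1, [:: 4; 15; 3; 9; 13]); (1, [:: 3; 19; 3; 6; 13])]);
  ([:: 3; 5; 15; 8; 14], [:: (2, [:: 3; 5; 15; 6; 14]); (2, [:: 3; 3; 15; 8; 14]); (4, [:: 3; 3; 15; 6; 14]); (1, [:: 3; 3; 19; 6; 13]); (2, [:: 4; 3; 15; 7; 14]); (2, [:: 2; 5; 15; 7; 14]); (1, [:: 3; 3; 15; 9; 14]); (1, [:: 3; 3; 15; 6; 17])]);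
  ([:: 3; 5; 8; 15; 14], [:: (2, [:: 3; 5; 6; 15; 14]); (2, [:: 3; 3; 8; 15; 14]); (4, [:: 3; 3; 6; 15; 14]); (1, [:: 3; 3; 10; 15; 13]); (2, [:: 2; 3; 10; 15; 13]); (1, [:: 3; 3; 6; 15; 17]); (1, [:: 3; 3; 6; 19; 13])]);
  ([:: 3; 5; 8; 14; 15], [:: (2, [:: 3; 5; 6; 14; 15]); (2, [:: 3; 3; 8; 14; 15]); (4, [:: 3; 3; 6; 14; 15]); (1, [:: 3; 3; 10; 13; 15]); (2, [:: 2; 3; 10; 13; 15]); (1, [:: 3; 3; 6; 13; 19]); (1, [:: 3; 3; 6; 17; 15])]);
  ([:: 15; 3; 5; 14; 8], [:: (2, [:: 15; 3; 5; 14; 6]); (2, [:: 15; 3; 3; 14; 8]); (4, [:: 15; 3; 3; 14; 6]); (1, [:: 15; 3; 3; 18; 5]); (2, [:: 15; 4; 3; 14; 7]); (2, [:: 15; 2; 5; 14; 7]); (1, [:: 15; 3; 3; 14; 9]); (1, [:: 19; 3; 3; 14; 5])]);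
  ([:: 3; 15; 5; 14; 8], [:: (2, [:: 3; 15; 5; 14; 6]); (2, [:: 3; 15; 3; 14; 8]); (4, [:: 3; 15; 3; 14; 6]); (1, [:: 3; 15; 3; 13; 10]); (2, [:: 2; 15; 3; 13; 10]); (1, [:: 3; 15; 3; 18; 5]); (1, [:: 3; 19; 3; 14; 5])]);
  ([:: 3; 5; 15; 14; 8], [:: (1, [:: 3; 5; 15; 14; 7]); (1, [:: 3; 5; 15; 13; 8]); (2, [:: 3; 5; 15; 14; 6]); (2, [:: 3; 5; 15; 13; 7]); (4, [:: 3; 3; 15; 14; 6]); (2, [:: 3; 3; 17; 13; 7]); (2, [:: 3; 3; 15; 13; 9]); (1, [:: 6; 3; 15; 13; 7]); (2, [:: 5; 3; 15; 13; 7]); (1, [:: 3; 3; 18; 13; 7]); (1, [:: 3; 3; 15; 14; 9]); (1, [:: 3; 3; 15; 13; 10]); (2, [:: 3; 4; 15; 14; 7]); (2, [:: 2; 6; 15; 13; 7]); (1, [:: 3; 3; 19; 14; 5]); (1, [:: 3; 3; 15; 18; 5])]);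
  ([:: 3; 5; 14; 15; 8], [:: (2, [:: 3; 5; 14; 15; 6]); (2, [:: 3; 3; 14; 15; 8]); (4, [:: 3; 3; 14; 15; 6]); (1, [:: 3; 3; 14; 15; 9]); (2, [:: 2; 3; 14; 15; 9]); (1, [:: 3; 3; 14; 19; 5]); (1, [:: 3; 3; 18; 15; 5])]);
  ([:: 3; 5; 14; 8; 15], [:: (2, [:: 3; 5; 14; 6; 15]); (2, [:: 3; 3; 14; 8; 15]); (4, [:: 3; 3; 14; 6; 15]); (1, [:: 3; 3; 14; 9; 15]); (2, [:: 2; 3; 14; 9; 15]); (1, [:: 3; 3; 14; 5; 19]); (1, [:: 3; 3; 18; 5; 15])]);
  ([:: 15; 7; 7; 8; 8], [:: (1, [:: 15; 7; 7; 8; 7]); (1, [:: 15; 7; 8; 7; 7]); (2, [:: 15; 7; 6; 7; 8]); (2, [:: 15; 6; 8; 7; 7]); (2, [:: 15; 6; 7; 8; 7]); (4, [:: 15; 5; 6; 7; 8])]);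
  ([:: 7; 15; 7; 8; 8], [:: (1, [:: 7; 15; 7; 8; 7]); (2, [:: 7; 15; 6; 8; 7]); (2, [:: 6; 15; 7; 8; 7]); (4, [:: 5; 15; 6; 8; 7])]);
  ([:: 7; 7; 15; 8; 8], [:: (1, [:: 7; 7; 15; 7; 8]); (1, [:: 8; 7; 15; 7; 7]); (2, [:: 6; 8; 15; 7; 7]); (2, [:: 6; 7; 15; 8; 7]); (2, [:: 7; 6; 15; 7; 8]); (1, [:: 9; 5; 15; 7; 8]); (4, [:: 6; 5; 15; 7; 8])]);
  ([:: 7; 7; 8; 15; 8], [:: (2, [:: 7; 7; 8; 15; 6]); (4, [:: 7; 7; 4; 15; 8]); (8, [:: 7; 7; 4; 15; 4]); (2, [:: 9; 7; 6; 15; 6]); (4, [:: 5; 9; 6; 15; 6]); (1, [:: 7; 9; 8; 15; 5]); (1, [:: 7; 7; 4; 23; 3]); (1, [:: 11; 7; 3; 15; 8]); (4, [:: 11; 7; 4; 15; 4]); (1, [:: 9; 7; 5; 15; 8]); (1, [:: 7; 11; 8; 15; 3]); (2, [:: 7; 10; 8; 15; 3]); (2, [:: 12; 7; 3; 15; 6]); (2, [:: 10; 9; 3; 15; 6]); (2, [:: 10; 7; 5; 15; 6])]);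
  ([:: 7; 7; 8; 8; 15], [:: (4, [:: 7; 7; 8; 4; 15]); (4, [:: 7; 7; 4; 8; 15]); (8, [:: 7; 7; 4; 4; 15]); (4, [:: 11; 7; 4; 4; 15]); (2, [:: 11; 7; 4; 6; 15]); (1, [:: 7; 7; 4; 3; 23]); (2, [:: 11; 7; 6; 4; 15]); (2, [:: 10; 9; 3; 6; 15]); (4, [:: 6; 9; 5; 6; 15]); (1, [:: 11; 7; 3; 6; 17]); (2, [:: 11; 7; 3; 5; 17]); (1, [:: 11; 7; 6; 3; 17]); (2, [:: 11; 7; 5; 3; 17]); (1, [:: 11; 10; 3; 5; 15]); (2, [:: 11; 9; 3; 5; 15]); (1, [:: 13; 7; 4; 5; 15]); (1, [:: 13; 7; 3; 6; 15]); (2, [:: 13; 7; 3; 5; 15]); (1, [:: 12; 9; 5; 3; 15]); (1, [:: 11; 9; 6; 3; 15]); (2, [:: 11; 9; 5; 3; 15]); (4, [:: 12; 5; 6; 3; 15]); (2, [:: 14; 8; 3; 3; 15]); (1, [:: 11; 9; 5; 4; 15]); (2, [:: 10; 6; 9; 3; 15]); (4, [:: 6; 6; 9; 5; 15]); (1, [:: 12; 5; 9; 3; 15]); (1, [:: 14; 7; 5; 3; 15]); (2, [:: 13; 7; 5; 3; 15]); (1, [:: 13; 8; 5; 3; 15])])]%N.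
Definition lookup (xs : seq nat) := foldr (fun p acc => if p.1 == xs then p.2 else acc) [::] certs.
Definition ins (i : nat) (e : seq nat) := take i e ++ 15%N :: drop i e.
Definition elist := [:: [:: 1; 7; 10; 12]; [:: 7; 1; 10; 12]; [:: 3; 3; 12; 12];
              [:: 3; 5; 8; 14]; [:: 3; 5; 14; 8]; [:: 7; 7; 8; 8]]%N.
Lemma all_ok : all (fun e => all (fun i => check (obT table) (lookup (ins i e)) (ins i e)) (iota 0 5)) elist.
Proof. vm_compute. reflexivity. Qed.

Lemma size_ins (i : 'I_5) e : size e = 4%N -> size (ins i e) = 5%N.
Proof.
move=> se; rewrite /ins size_cat /= size_take size_drop se.
by case: i => [[|[|[|[|[|]]]]] ?].
Qed.

Lemma ins_i (i : 'I_5) e : size e = 4%N -> nth 0%N (ins i e) i = 15%N.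
Proof.
move=> se; have hi : (i <= size e)%N by rewrite se -ltnS ltn_ord.
by rewrite /ins nth_cat size_take_min (minn_idPl hi) ltnn subnn.
Qed.

Lemma ins_lift (i : 'I_5) (j : 'I_4) e : size e = 4%N -> nth 0%N (ins i e) (lift i j) = nth 0%N e j.
Proof.
move=> se; have hi : (i <= size e)%N by rewrite se -ltnS ltn_ord.
rewrite /ins nth_cat size_take_min (minn_idPl hi) /= /bump.
case: (leqP i j) => hij.
  rewrite add1n ltnNge ltnW //= subSn //= nth_drop subnKC //.
by rewrite add0n hij nth_take.
Qed.

Lemma eq_part e (i : 'I_5) : size e = 4%N ->
  'X_[mkm (ins i e)] = 'X_i ^+ 15 * f_ i (mono4 e).
Proof.
move=> se; rewrite mpolyXE_id (bigD1_ord i) //= !gmE /gm mkm_val ?size_ins //.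
rewrite ins_i //; congr (_ * _).
rewrite /f_ /mono4 rmorph_prod; apply: eq_bigr => j _.
rewrite rmorphXn.
have h := comp_mpolyXU j [tuple ('X_(lift i j0) : P 5) | j0 < 4].
rewrite -tnth_nth tnth_mktuple in h.
congr (_ ^+ _); first exact: (esym h).
by rewrite gmE /gm mkm_val ?size_ins // ins_lift.
Qed.

Theorem lemma4 :
  forall e : seq nat,
    e \in [:: [:: 1; 7; 10; 12]; [:: 7; 1; 10; 12]; [:: 3; 3; 12; 12];
              [:: 3; 5; 8; 14]; [:: 3; 5; 14; 8]; [:: 7; 7; 8; 8]]%N ->
  forall i : 'I_5,
    exists x : 'X_{1..5},
      'X_[x] = 'X_i ^+ 15 * f_ i (mono4 e) /\ strictly_inadmissible x.
Proof.
move=> e He i.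
have He' : e \in elist := He.
have se : size e = 4%N.
  have hs : all (fun e => size e == 4%N) elist by [].
  exact/eqP/(allP hs).
exists (mkm (ins i e)); split; first exact: eq_part.
apply: (@certify (lookup (ins i e))).
have := allP all_ok e He' => /allP /(_ i); rewrite mem_iota add0n ltn_ord; exact.
Qed.
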